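(* Let $r\geqslant2$ and let $\alpha:\mathrm{GL}_r(k_\mathrm{F})\to\mathrm{R}$ be a function such that $\alpha(ug)=\overline\psi(u)\alpha(g)$ for all $u\in\mathrm{U}_r(k_\mathrm{F})$, $g\in\mathrm{GL}_r(k_\mathrm{F})$. Then for all $g\in\mathrm{GL}_r(k_\mathrm{F})$, $$\frac{1}{|\mathrm{U}_r(k_\mathrm{F})|}\sum_{u\in\mathrm{U}_r(k_\mathrm{F})}\ \sum_{b\in\mathrm{B}^{\mathrm{op}}_{r-1}(k_\mathrm{F})}\overline\psi^{-1}(u)\,\alpha(bug)=\alpha(g).$$
   Context: $k_\mathrm{F}$ is a finite field of characteristic $p$ and $\mathrm{R}$ an algebraically closed field of characteristic $\ell\neq p$. $\mathrm{U}_r(k_\mathrm{F})$ is the group of upper unitriangular $r\times r$ matrices; $\overline\psi:k_\mathrm{F}\to\mathrm{R}^\times$ is a non-trivial character, and $\overline\psi(u):=\overline\psi(u_{1,2}+\dots+u_{r-1,r})$ for $u\in\mathrm{U}_r(k_\mathrm{F})$. $\mathrm{B}^{\mathrm{op}}_{r-1}(k_\mathrm{F})$ is the group of invertible lower triangular $(r-1)\times(r-1)$ matrices, viewed in $\mathrm{GL}_r(k_\mathrm{F})$ via $g\mapsto\mathrm{diag}(g,1)$ (for $r=2$, this is $\{\mathrm{diag}(a,1):a\in k_\mathrm{F}^\times\}$). *)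

(* Defs.v *)
From HB Require Import structures.
From mathcomp Require Import all_boot all_order all_algebra all_fingroup all_field.
Set Implicit Arguments. Unset Strict Implicit. Unset Printing Implicit Defensive.
Import GRing.Theory.
Local Open Scope ring_scope.

(* GL_r(kF) is represented by the invertible matrices g : 'M[kF]_r (g \in unitmx). *)

Definition unitri (F : finFieldType) (r : nat) : {set 'M[F]_r} :=
  [set u : 'M[F]_r | [forall i : 'I_r, forall j : 'I_r,
     if (i < j)%N then true else if i == j then u i j == 1 else u i j == 0]].

(* B^op_{r-1}(kF) embedded in GL_r(kF) via b |-> diag(b, 1): invertible lower
   triangular r x r matrices whose last row and last column coincide with
   those of the identity matrix. *)
Definition Bop_emb (F : finFieldType) (r : nat) : {set 'M[F]_r} :=
  [set b : 'M[F]_r | (b \in unitmx) &&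
     [forall i : 'I_r, forall j : 'I_r,
        [&& (i < j)%N ==> (b i j == 0),
            (i.+1 == r) ==> (b i j == (i == j)%:R)
          & (j.+1 == r) ==> (b i j == (i == j)%:R)]]].

Definition psibar (F : finFieldType) (R : fieldType) (psi : F -> R) (r : nat)
  (u : 'M[F]_r) : R :=
  psi (\sum_(i < r) \sum_(j < r | j == i.+1 :> nat) u i j).

(* Main.v *)
Require Import Defs.
From HB Require Import structures.
From mathcomp Require Import all_boot all_order all_algebra all_fingroup all_field all_solvable.
Import GRing.Theory.
Local Open Scope ring_scope.
Set Implicit Arguments. Unset Strict Implicit.
From mathcomp Require Import all_solvable.

Section U.
Variables (F : finFieldType) (r : nat).
Implicit Types u v : 'M[F]_r.

Lemma unitriP u : reflect (forall i j : 'I_r, (j <= i)%N -> u i j = (i == j)%:R) (u \in unitri F r).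
Proof.
rewrite inE; apply: (iffP forallP) => [H i j ji|H i].
  move/forallP: (H i) => /(_ j); rewrite ltnNge ji /=.
  by case: eqP => [->|_] /eqP ->.
apply/forallP => j; case: ltnP => // ji; rewrite H //.
by case: eqP.
Qed.

Lemma unitri_low u (i j : 'I_r) : u \in unitri F r -> (j < i)%N -> u i j = 0.
Proof. move/unitriP => H ji; rewrite (H i j (ltnW ji)).
suff -> : (i == j) = false by [].
by apply/negbTE; apply: contraTneq ji => ->; rewrite ltnn. Qed.

Lemma unitri_diag u (i : 'I_r) : u \in unitri F r -> u i i = 1.
Proof. by move/unitriP => H; rewrite (H i i (leqnn _)) eqxx. Qed.
Arguments unitri_diag {u} i.
Arguments unitri_low {u i j}.

Lemma unitri_mul u v : u \in unitri F r -> v \in unitri F r -> u *m v \in unitri F r.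
Proof.
move=> Hu Hv; apply/unitriP => i j ji; rewrite mxE.
case: (eqVneq i j) => [<-|ne].
  rewrite (bigD1 i) //= (unitri_diag i Hu) (unitri_diag i Hv) mul1r big1 ?addr0 // => k ki.
  case: (ltnP k i) => [ki'|ik].
    by rewrite (unitri_low Hu ki') mul0r.
  have ik' : (i < k)%N by rewrite ltn_neqAle ik andbT; apply: contra ki => /eqP e; apply/eqP/val_inj.
  by rewrite (unitri_low Hv ik') mulr0.
have ji' : (j < i)%N by rewrite ltn_neqAle ji andbT; apply: contra ne => /eqP e; apply/eqP/val_inj.
rewrite big1; last first.
  move=> k _; case: (ltnP k i) => [ki|ik].
  by rewrite (unitri_low Hu ki) mul0r.
by rewrite (unitri_low Hv (leq_trans ji' ik)) mulr0.
by [].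
Qed.
Lemma unitri_unit u : u \in unitri F r -> u \in unitmx.
Proof.
move=> Hu; rewrite unitmxE -det_tr det_trig.
  by rewrite big1 ?unitr1 // => i _; rewrite mxE unitri_diag.
by apply/is_trig_mxP => i j ij; rewrite mxE unitri_low.
Qed.

Lemma unitri1 : 1%:M \in unitri F r.
Proof. by apply/unitriP => i j _; rewrite mxE. Qed.
Definition sd (u : 'M[F]_r) : F := \sum_(i < r) \sum_(j < r | j == i.+1 :> nat) u i j.

Lemma sd_mul u v : u \in unitri F r -> v \in unitri F r -> sd (u *m v) = sd u + sd v.
Proof.
move=> Hu Hv; rewrite /sd -big_split; apply: eq_bigr => i _; rewrite -big_split.
apply: eq_bigr => j /eqP hj; rewrite mxE.
have nji : j != i by apply/eqP => e; move: hj; rewrite e; apply: n_Sn.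
rewrite (bigD1 i) //= (bigD1 j) //= (unitri_diag i Hu) (unitri_diag j Hv) mul1r mulr1.
rewrite big1 ?addr0; first by rewrite addrC.
move=> k /andP [ki kj].
case: (ltnP k i) => [lki|lik]; first by rewrite (unitri_low Hu lki) mul0r.
have lik' : (j < k)%N.
  have h1 : (i < k)%N by rewrite ltn_neqAle lik andbT eq_sym; apply: contra ki => /eqP e; apply/eqP/val_inj.
  rewrite ltn_neqAle; apply/andP; split; last by rewrite hj.
  by rewrite eq_sym; apply: contra kj => /eqP e; apply/eqP/val_inj.
by rewrite (unitri_low Hv lik') mulr0.
Qed.
Lemma sdD (A B : 'M[F]_r) : sd (A + B) = sd A + sd B.
Proof. rewrite /sd -big_split; apply: eq_bigr => i _; rewrite -big_split; apply: eq_bigr => j _; by rewrite mxE. Qed.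

Lemma sdZ x (A : 'M[F]_r) : sd (x *: A) = x * sd A.
Proof. rewrite /sd mulr_sumr; apply: eq_bigr => i _; rewrite mulr_sumr; apply: eq_bigr => j _; by rewrite mxE. Qed.

Lemma sd1 : sd 1%:M = 0.
Proof.
rewrite /sd big1 // => i _; rewrite big1 // => j /eqP hj; rewrite mxE.
suff -> : (i == j) = false by [].
by apply/negbTE/eqP => e; move: hj; rewrite e; apply: n_Sn.
Qed.

Lemma sd_col (M : 'M[F]_r) (k k' : 'I_r) : k'  = k.+1 :> nat ->
  (forall a j, j != k' -> M a j = 0) -> sd M = M k k'.
Proof.
move=> hk HM; rewrite /sd (bigD1 k) //= (bigD1 k') ?hk //= big1 ?addr0.
  rewrite big1 ?addr0 // => a ak; rewrite big1 // => j /eqP hj; apply: HM.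
  apply/eqP => e; move/eqP: ak; apply; apply: val_inj; apply/eqP; by rewrite -eqSS -hj e hk.
by move=> j /andP [/eqP hj jk]; apply: HM; apply: contra jk => /eqP ->; apply/eqP/val_inj; rewrite /= hk.
Qed.
Definition Dpos : pred ('I_r * 'I_r) := fun ij : 'I_r * 'I_r => (ij.1 < ij.2)%N.

Lemma card_unitri : #|unitri F r| = (#|F| ^ #|Dpos|)%N.
Proof.
pose phi (f : {ffun 'I_r * 'I_r -> F}) : 'M[F]_r :=
  \matrix_(i, j) (if (i < j)%N then f (i, j) else (i == j)%:R).
have -> : unitri F r = [set phi f | f in pffun_on 0 Dpos predT].
  apply/setP => u; apply/idP/imsetP.
    move=> Hu; exists [ffun ij : 'I_r * 'I_r => if (ij.1 < ij.2)%N then u ij.1 ij.2 else 0].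
      apply/pffun_onP; split => //.
      by apply/supportP => ij hij; rewrite ffunE ifF //; exact: negbTE hij.
    apply/matrixP => i j; rewrite !mxE ffunE /=; case: ltnP => // ji.
    by move/unitriP: Hu => ->.
  move=> [f _ ->]; apply/unitriP => i j ji; by rewrite mxE ltnNge ji.
rewrite card_in_imset ?card_pffun_on ?card_predT //.
move=> f1 f2 /pffun_onP [/supportP s1 _] /pffun_onP [/supportP s2 _] e.
apply/ffunP => [[i j]]; case: (boolP ((i, j) \in Dpos)) => hij; last by rewrite s1 ?s2.
by have := congr1 (fun M : 'M[F]_r => M i j) e; rewrite /phi !mxE /= -[(i < j)%N]/((i, j) \in Dpos) hij.
Qed.
Lemma ord_ltn_eqF {a c : 'I_r} : (a < c)%N -> (a == c) = false.
Proof. by move=> h; apply/negbTE; apply: contraTneq h => ->; rewrite ltnn. Qed.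

Lemma Bop_dev (b : 'M[F]_r) : b \in Bop_emb F r -> b != 1%:M ->
  exists (i k k' : 'I_r), [/\ (i <= k)%N, k' = k.+1 :> nat, b k i != (k == i)%:R
     & forall m j : 'I_r, (k < m)%N -> b m j = (m == j)%:R].
Proof.
rewrite inE => /andP [_ /forallP Hb] nb1.
pose P := fun m : 'I_r => [exists j, b m j != (m == j)%:R].
have [m0 Pm0] : exists m0, P m0.
  apply/existsP; apply: contraR nb1 => /existsPn H; apply/eqP/matrixP => a c.
  by move: (H a) => /existsPn /(_ c); rewrite negbK mxE => /eqP.
case: (arg_maxnP (fun m : 'I_r => (m : nat)) Pm0) => k /existsP [i Hki] kmax.
have ik : (i <= k)%N.
  rewrite leqNgt; apply/negP => ki; move: Hki; move/forallP: (Hb k) => /(_ i) /and3P [/implyP h _ _].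
  by rewrite (eqP (h ki)) (ord_ltn_eqF ki) mulr0n eqxx.
have kr : (k.+1 < r)%N.
  rewrite ltn_neqAle ltn_ord andbT; apply/negP => /eqP e.
  move: Hki; move/forallP: (Hb k) => /(_ i) /and3P [_ /implyP h _].
  by rewrite (eqP (h (introT eqP e))) eqxx.
exists i, k, (Ordinal kr); split => // m j km.
apply/eqP; apply: contraTT km => hm; rewrite -leqNgt; apply: kmax; apply/existsP; by exists j.
Qed.
End U.

Lemma mul_delta_entry (F : finFieldType) r (b : 'M[F]_r) (i k : 'I_r) a c :
  (b *m delta_mx i k) a c = b a i * (c == k)%:R.
Proof.
rewrite mxE (bigD1 i) //= big1 ?addr0; first by rewrite mxE eqxx.
by move=> m mi; rewrite mxE (negbTE mi) mulr0.
Qed.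

Section Cancel.
Variables (F : finFieldType) (R : fieldType) (psi : F -> R) (r : nat).
Hypothesis psi_unit : forall x, psi x != 0.
Hypothesis psi_add : forall x y, psi (x + y) = psi x * psi y.
Variable alpha : 'M[F]_r -> R.
Hypothesis halpha : forall u g, u \in unitri F r -> g \in unitmx ->
     alpha (u *m g) = psibar psi u * alpha g.

Lemma cancel_b (b g : 'M[F]_r) y : psi y != 1 -> b \in Bop_emb F r -> b != 1%:M -> g \in unitmx ->
  \sum_(u in unitri F r) (psibar psi u)^-1 * alpha (b *m u *m g) = 0.
Proof.
move=> psiy Bb nb1 gU.
have bU : b \in unitmx by move: Bb; rewrite inE => /andP [].
have [i [k [k' [ik hk' bki Hrow]]]] := Bop_dev Bb nb1.
have kk' : (k < k')%N by rewrite hk'.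
have ik' : (i < k')%N by apply: leq_ltn_trans ik kk'.
pose c := b k i - (k == i)%:R.
have c0 : c != 0 by rewrite subr_eq0.
pose x := y / c.
pose D : 'M[F]_r := delta_mx i k'.
pose u0 := 1%:M + x *: D.
pose u1 := 1%:M + x *: (b *m D).
have u0U : u0 \in unitri F r.
  apply/unitriP => a e ea; rewrite !mxE.
  case: (eqVneq a i) => [ai|]; last by rewrite andFb mulr0 addr0.
  case: (eqVneq e k') => [ek|]; last by rewrite andbF mulr0 addr0.
  by move: ea; rewrite ai ek leqNgt ik'.
have u1U : u1 \in unitri F r.
  apply/unitriP => a e ea; rewrite mxE [in X in _ + X]mxE mul_delta_entry mxE.
  case: (eqVneq e k') => [ek|]; last by rewrite mulr0 mulr0 addr0.
  have ka : (k < a)%N by rewrite -ltnS -hk' -ek.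
  by rewrite Hrow // (eq_sym a i) (ord_ltn_eqF (leq_ltn_trans ik ka)) mul0r mulr0 addr0.
have DbD : D *m b = D.
  apply/matrixP => a e; rewrite mxE (bigD1 k') //= big1 ?addr0.
    rewrite Hrow // !mxE eqxx andbT.
    by case: (a == i); rewrite ?mul1r ?mul0r // eq_sym.
  by move=> m mk; rewrite !mxE (negbTE mk) andbF mul0r.
have bu0 : b *m u0 = u1 *m b.
  by rewrite /u0 /u1 mulmxDr mulmxDl mulmx1 mul1mx -scalemxAr -scalemxAl -mulmxA DbD.
have sdD0 : sd D = (k == i)%:R.
  rewrite (sd_col (k:=k) (k':=k')) //; first by rewrite mxE eqxx andbT.
  by move=> a j jk; rewrite mxE (negbTE jk) andbF.
have sdbD : sd (b *m D) = b k i.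
  rewrite (sd_col (k:=k) (k':=k')) //; first by rewrite mul_delta_entry eqxx mulr1.
  by move=> a j jk; rewrite mul_delta_entry (negbTE jk) mulr0.
have sdu0 : sd u0 = x * (k == i)%:R by rewrite /u0 sdD sd1 add0r sdZ sdD0.
have sdu1 : sd u1 = y + sd u0.
  rewrite /u1 sdD sd1 add0r sdZ sdbD sdu0 /x.
  by rewrite -[b k i](subrK (k == i)%:R) mulrDr -/c divfK.
have u0unit := unitri_unit u0U.
have im : [set u0 *m u | u in unitri F r] = unitri F r.
  apply/eqP; rewrite eqEcard; apply/andP; split.
    by apply/subsetP => v /imsetP [u uU ->]; exact: unitri_mul.
  rewrite card_in_imset // => v w _ _; exact: (can_inj (mulKmx u0unit)).
have step : forall u, u \in unitri F r ->
   (psibar psi (u0 *m u))^-1 * alpha (b *m (u0 *m u) *m g)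
   = psi y * ((psibar psi u)^-1 * alpha (b *m u *m g)).
  move=> u uU.
  have -> : b *m (u0 *m u) *m g = u1 *m (b *m u *m g) by rewrite !mulmxA bu0.
  rewrite halpha //; last by rewrite !unitmx_mul bU gU unitri_unit.
  rewrite /psibar -/(sd (u0 *m u)) -/(sd u1) -/(sd u) sd_mul // sdu1 !psi_add invfM.
  have := psi_unit (sd u0); have := psi_unit (sd u).
  move: (psi (sd u0)) (psi (sd u)) (psi y) (alpha (b *m u *m g)) => A B Y Z hB hA.
  by rewrite [Y * A]mulrC -!mulrA [B^-1 * _]mulrCA mulKf // mulrCA.
set S := \sum_(u in unitri F r) _.
have : S = psi y * S.
  rewrite /S -{1}im big_imset /=; last by move=> v w _ _; exact: (can_inj (mulKmx u0unit)).
  by rewrite (eq_bigr _ step) -mulr_sumr.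
move=> /eqP; rewrite -subr_eq0 -{1}(mul1r S) -mulrBl mulf_eq0.
by rewrite subr_eq0 eq_sym (negbTE psiy) /= => /eqP.
Qed.
End Cancel.

Unset Implicit Arguments.

Theorem mainTheorem12
  (kF : finFieldType) (R : closedFieldType) (p : nat)
  (hp : p \in [pchar kF]) (hl : p \notin [pchar R])
  (psi : kF -> R)
  (psi_unit : forall x, psi x != 0)
  (psi_add : forall x y, psi (x + y) = psi x * psi y)
  (psi_nontriv : exists x, psi x != 1)
  (r : nat) (hr : (2 <= r)%N)
  (alpha : 'M[kF]_r -> R)
  (halpha : forall u g, u \in unitri kF r -> g \in unitmx ->
     alpha (u *m g) = psibar psi u * alpha g) :
  forall g : 'M[kF]_r, g \in unitmx ->
    (#|unitri kF r|%:R)^-1 *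
      \sum_(u in unitri kF r) \sum_(b in Bop_emb kF r)
        (psibar psi u)^-1 * alpha (b *m u *m g)
    = alpha g.
Proof.
move=> g gU.
have [y psiy] := psi_nontriv.
have B1 : 1%:M \in Bop_emb kF r.
  rewrite inE unitmx1; apply/forallP => i; apply/forallP => j; rewrite !mxE.
  apply/and3P; split; apply/implyP => // h.
  by rewrite (ord_ltn_eqF h).
rewrite exchange_big /= (bigD1 1%:M) //= [X in _ + X]big1 ?addr0; last first.
  move=> b /andP [Bb nb1]; exact: (cancel_b psi_unit psi_add halpha psiy Bb nb1 gU).
rewrite (eq_bigr (fun _ => alpha g)); last first.
  move=> u uU; rewrite mul1mx halpha // mulKf //; exact: psi_unit.
have pr : prime p := pcharf_prime hp.
have pn0 : p%:R != 0 :> R.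
  by move: hl; rewrite inE pr /=.
have cn0 : (#|unitri kF r|%:R : R) != 0.
  rewrite card_unitri natrX expf_neq0 //.
  have := abelem_pgroup (fin_ring_pchar_abelem hp).
  by move/card_pgroup; rewrite cardsT => ->; rewrite natrX expf_neq0.
by rewrite sumr_const -[alpha g *+ _]mulr_natl mulKf.
Qed.
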